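(* Let $n>2$. Then the following statement is false: ''for every $A\in\mathrm{Hull}(\Lambda_2(3,n))$ we have $\operatorname{Per}(A)\ge(n!/n^n)^{2}$, with equality if and only if $A=n^{-2}J_n^3$.'' That is, there exists $A\in\mathrm{Hull}(\Lambda_2(3,n))$ such that either $\operatorname{Per}(A)<(n!/n^n)^2$, or $\operatorname{Per}(A)=(n!/n^n)^2$ and $A\neq n^{-2}J_n^3$.
   Context: Let $I_n=\{1,\dots,n\}$. A $3$-dimensional matrix of order $n$ is a function $I_n^3\to\mathbb R$. A $2$-plane is the set of positions with one coordinate fixed. $\Lambda_2(3,n)$ is the set of $(0,1)$-valued $3$-dimensional matrices of order $n$ with exactly one $1$ in each $2$-plane. $\mathrm{Hull}(X)$ denotes the convex hull of $X$. A diagonal is a selection of $n$ positions any two of which differ in every coordinate; $\operatorname{Per}(A)$ is the sum over diagonals of the product of the entries on the diagonal. $J_n^3$ is the $3$-dimensional matrix of order $n$ with all entries $1$. *)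

(* Defs.v *)
From HB Require Import structures.
From mathcomp Require Import all_boot all_order all_algebra.
Set Implicit Arguments. Unset Strict Implicit. Unset Printing Implicit Defensive.
Import Order.TTheory GRing.Theory Num.Theory.
Local Open Scope ring_scope.

Definition pos (n : nat) := ('I_n * 'I_n * 'I_n)%type.

Definition coord (n : nat) (k : 'I_3) (p : pos n) : 'I_n :=
  match val k with 0%N => p.1.1 | 1%N => p.1.2 | _ => p.2 end.

Notation mat3 R n := {ffun pos n -> R}.

Definition plane (n : nat) (k : 'I_3) (v : 'I_n) : {set pos n} :=
  [set p | coord k p == v].

Definition Lambda2 (R : nzRingType) (n : nat) (A : mat3 R n) : Prop :=
  (forall p, A p = 0 \/ A p = 1) /\
  (forall (k : 'I_3) (v : 'I_n), #|[set p in plane k v | A p == 1]| = 1%N).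

Definition Hull (R : realFieldType) (n : nat) (X : mat3 R n -> Prop)
  (A : mat3 R n) : Prop :=
  exists (m : nat) (c : 'I_m -> R) (L : 'I_m -> mat3 R n),
    (forall k, X (L k)) /\ (forall k, 0 <= c k) /\
    \sum_(k < m) c k = 1 /\ A = [ffun p => \sum_(k < m) c k * L k p].

Definition diagonal (n : nat) (D : {set pos n}) : bool :=
  (#|D| == n) && [forall p in D, forall q in D, (p != q) ==> [forall k : 'I_3, coord k p != coord k q]].

Definition Per (R : realFieldType) (n : nat) (A : mat3 R n) : R :=
  \sum_(D : {set pos n} | diagonal D) \prod_(p in D) A p.

Definition constmat (R : Type) (n : nat) (a : R) : mat3 R n := [ffun _ => a].

(* Main.v *)
Require Import Defs.
From HB Require Import structures.
From mathcomp Require Import all_boot all_order all_algebra.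
From mathcomp Require Import all_fingroup.
From mathcomp Require Import ring lra.
Import Order.TTheory GRing.Theory Num.Theory.
Local Open Scope ring_scope.
Set Implicit Arguments. Unset Strict Implicit. Unset Printing Implicit Defensive.

Lemma hull_fin (R : realFieldType) n (X : mat3 R n -> Prop) (I : finType)
  (c : I -> R) (L : I -> mat3 R n) :
  (forall k, X (L k)) -> (forall k, 0 <= c k) -> \sum_k c k = 1 ->
  Hull X [ffun p => \sum_k c k * L k p].
Proof.
move=> HX Hc Hs.
exists #|I|, (fun i => c (enum_val i)), (fun i => L (enum_val i)).
split; first by move=> k; apply: HX.
split; first by move=> k; apply: Hc.
split; first by rewrite -(big_enum_val (A := I)) /=.
apply/ffunP => p; rewrite !ffunE.
by rewrite -(big_enum_val (A := I) (fun k => c k * L k p)).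
Qed.

Definition diagset n (s t : {perm 'I_n}) : {set pos n} :=
  [set (i, s i, t i) | i : 'I_n].

Lemma mem_diagset n (s t : {perm 'I_n}) (p : pos n) :
  (p \in diagset s t) = (p.1.2 == s p.1.1) && (p.2 == t p.1.1).
Proof.
case: p => [[x y] z] /=; apply/imsetP/andP => [[i _ [-> -> ->]] | [/eqP -> /eqP ->]] //.
by exists x.
Qed.

Lemma diag_inj n (s t : {perm 'I_n}) : injective (fun i : 'I_n => (i, s i, t i)).
Proof. by move=> i j [->]. Qed.

Lemma diagonal_diagset n (s t : {perm 'I_n}) : diagonal (diagset s t).
Proof.
apply/andP; split.
  by rewrite card_imset ?card_ord //; apply: diag_inj.
apply/forall_inP => p /imsetP [i _ ->]; apply/forall_inP => q /imsetP [j _ ->].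
apply/implyP => neq; apply/forallP => k.
have nij : i != j by apply: contra neq => /eqP ->.
case: k => [[|[|[|k]]] Hk] //=; rewrite /Defs.coord /=.
- by rewrite (inj_eq perm_inj).
- by rewrite (inj_eq perm_inj).
Qed.

Lemma diag_repr n (D : {set pos n}) :
  diagonal D -> exists s t : {perm 'I_n}, D = diagset s t.
Proof.
move/andP=> [/eqP cD /forall_inP H].
have Hd : forall p q, p \in D -> q \in D -> p != q -> forall k, Defs.coord k p != Defs.coord k q.
  move=> p q Hp Hq ne k.
  by move: (H p Hp) => /forall_inP /(_ q Hq) /implyP /(_ ne) /forallP /(_ k).
have c0 : {in D &, injective (fun p : pos n => p.1.1)}.
  move=> p q Hp Hq e; apply/eqP; apply: contraT => ne.
  by have := Hd p q Hp Hq ne ord0; rewrite /Defs.coord /= e eqxx.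
have imT : [set p.1.1 | p in D] = setT.
  apply/eqP; rewrite eqEcard subsetT card_in_imset // cardsT card_ord cD.
  by rewrite /= leqnn.
have ex : forall i : 'I_n, exists p, (p \in D) && (p.1.1 == i).
  move=> i; have : i \in [set p.1.1 | p in D] by rewrite imT inE.
  by case/imsetP => p Hp ->; exists p; rewrite Hp eqxx.
have [F HF] := fin_all_exists ex.
have Fin i : F i \in D by case/andP: (HF i).
have F1 i : (F i).1.1 = i by case/andP: (HF i) => _ /eqP.
have Funi p : p \in D -> p = F p.1.1.
  by move=> Hp; apply: c0 => //; rewrite F1.
have Fne i j : i != j -> F i != F j.
  by move=> ne; apply: contra ne => /eqP e; rewrite -(F1 i) -(F1 j) e.
have s0inj : injective (fun i => (F i).1.2).
  move=> i j e; apply/eqP; apply: contraT => ne.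
  by have := Hd _ _ (Fin i) (Fin j) (Fne _ _ ne) (Ordinal (isT : 1 < 3)%N); rewrite /Defs.coord /= e eqxx.
have t0inj : injective (fun i => (F i).2).
  move=> i j e; apply/eqP; apply: contraT => ne.
  by have := Hd _ _ (Fin i) (Fin j) (Fne _ _ ne) (Ordinal (isT : 2 < 3)%N); rewrite /Defs.coord /= e eqxx.
exists (perm s0inj), (perm t0inj).
apply/setP => p; rewrite mem_diagset !permE; apply/idP/andP.
  by move=> Hp; have E := Funi p Hp; rewrite -E; split.
case: p => [[x y] z] /= [/eqP h2 /eqP h3].
have -> : (x, y, z) = F x.
  by move: (F1 x) h2 h3; case: (F x) => [[a b] c] /= -> -> ->.
exact: Fin.
Qed.

Lemma card_diag n : (#|[set D : {set pos n} | diagonal D]| <= n`! * n`!)%N.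
Proof.
apply: (@leq_trans #|[set diagset st.1 st.2 | st in [set: {perm 'I_n} * {perm 'I_n}]]|).
  apply: subset_leq_card; apply/subsetP => D; rewrite inE => /diag_repr [s [t ->]].
  by apply/imsetP; exists (s, t); rewrite ?inE.
by rewrite (leq_trans (leq_imset_card _ _)) // cardsT card_prod card_Sn.
Qed.

Definition Emat (R : realFieldType) n (s t : {perm 'I_n}) : mat3 R n :=
  [ffun p => if p \in diagset s t then 1 else 0].

Lemma Lambda2_Emat (R : realFieldType) n (s t : {perm 'I_n}) : Lambda2 (Emat R s t).
Proof.
split.
  by move=> p; rewrite ffunE; case: ifP; [right|left].
have E1 p : (Emat R s t p == 1) = (p.1.2 == s p.1.1) && (p.2 == t p.1.1).
  rewrite ffunE mem_diagset; case: ifP => _; first by rewrite eqxx.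
  by rewrite eq_sym oner_eq0.
move=> k v; case: k => [[|[|[|k]]] Hk] //.
- rewrite (_ : [set _ in _ | _] = [set (v, s v, t v)]) ?cards1 //.
  apply/setP => -[[x y] z]; rewrite !inE E1 /Defs.coord /=.
  apply/andP/eqP => [[/eqP -> /andP [/eqP -> /eqP ->]] // | [-> -> ->]].
  by rewrite !eqxx.
- rewrite (_ : [set _ in _ | _] = [set ((s^-1)%g v, v, t ((s^-1)%g v))]) ?cards1 //.
  apply/setP => -[[x y] z]; rewrite !inE E1 /Defs.coord /=.
  apply/andP/eqP => [[/eqP -> /andP [/eqP -> /eqP ->]] | [-> -> ->]].
    by rewrite permK.
  by rewrite permKV !eqxx.
- rewrite (_ : [set _ in _ | _] = [set ((t^-1)%g v, s ((t^-1)%g v), v)]) ?cards1 //.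
  apply/setP => -[[x y] z]; rewrite !inE E1 /Defs.coord /=.
  apply/andP/eqP => [[/eqP -> /andP [/eqP -> /eqP ->]] | [-> -> ->]].
    by rewrite permK.
  by rewrite permKV !eqxx.
Qed.

Section Main.
Variable R : realFieldType.
Variable m : nat.
Local Notation N := m.+3.
Definition i0 : 'I_N := Ordinal (isT : (0 < N)%N).
Definition i1 : 'I_N := Ordinal (isT : (1 < N)%N).
Definition i2 : 'I_N := Ordinal (isT : (2 < N)%N).
Definition sv (x : 'I_N) : R := if x == i0 then 1 else if x == i1 then -1 else 0.
Definition Bm (p : pos N) : R := sv p.1.1 * sv p.1.2 * sv p.2.
Definition sig (b : bool) : {perm 'I_N} := if b then tperm i0 i1 else 1%g.
Definition asg (b : bool) : R := if b then -1 else 1.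
Definition tau (j : 'I_4) : {perm 'I_N} :=
  match val j with
  | 0 => tperm i1 i2
  | 1 => (tperm i1 i2 * tperm i0 i1)%g
  | 2 => (tperm i0 i1 * tperm i1 i2)%g
  | _ => tperm i0 i2 end.
Definition bco (j : 'I_4) : R :=
  match val j with 0 => 1 | 1 => -1 | 2 => 1 | _ => -1 end.

Definition ind (b : bool) : R := if b then 1 else 0.

Lemma tpE (a b c : 'I_N) : tperm a b c = if c == a then b else if c == b then a else c.
Proof. by case: tpermP => [->|->|/eqP/negbTE -> /eqP/negbTE ->]; rewrite ?eqxx //; case: eqP => // ->. Qed.

Lemma e01 : (i0 == i1) = false. Proof. by []. Qed.
Lemma e02 : (i0 == i2) = false. Proof. by []. Qed.
Lemma e10 : (i1 == i0) = false. Proof. by []. Qed.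
Lemma e12 : (i1 == i2) = false. Proof. by []. Qed.
Lemma e20 : (i2 == i0) = false. Proof. by []. Qed.
Lemma e21 : (i2 == i1) = false. Proof. by []. Qed.
Definition eqsE := (e01, e02, e10, e12, e20, e21).

Ltac useF := repeat match goal with H : (_ == _) = false |- _ =>
  rewrite ?H; rewrite eq_sym in H; rewrite ?H; clear H end.

Ltac split_var v :=
  case: (eqVneq v i0) => [->|/negbTE ?]; [|case: (eqVneq v i1) => [->|/negbTE ?];
   [|case: (eqVneq v i2) => [->|/negbTE ?]]].

Lemma factor (x y z : 'I_N) :
  (\sum_(b : bool) asg b * ind (y == sig b x)) *
  (\sum_(j : 'I_4) bco j * ind (z == tau j x)) = sv x * sv y * sv z.
Proof.
rewrite big_bool /= (big_ord_recl 3) (big_ord_recl 2) (big_ord_recl 1) big_ord1 /=.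
rewrite /asg /bco /tau /sig /= /bump /= !perm1 !permM !tpE.
split_var x; split_var y; split_var z; rewrite /sv /ind /= ?eqxx ?eqsE /=;
  useF; rewrite /= ?eqxx ?eqsE /=; useF; rewrite /= ?eqxx ?eqsE /=; try ring.
Qed.
End Main.

Arguments sig {m} b.
Arguments tau {m} j.
Arguments i0 {m}.
Arguments i1 {m}.
Arguments i2 {m}.

Section Hull.
Variable R : realFieldType.
Variable m : nat.
Local Notation N := m.+3.

Definition rot (a : 'I_N) : {perm 'I_N} := perm (addIr a).
Lemma rotE a x : rot a x = x + a. Proof. by rewrite permE. Qed.

Lemma sum_pair (I J : finType) (F : I * J -> R) : \sum_k F k = \sum_i \sum_j F (i, j).
Proof. by rewrite pair_bigA; apply: eq_bigr => -[]. Qed.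

Lemma sum_ind1 (c : 'I_N) : \sum_(a : 'I_N) ind R (a == c) = 1.
Proof.
rewrite (bigD1 c) //= /ind eqxx big1 ?addr0 // => a /negbTE -> //.
Qed.

Lemma eq_shift (y s a : 'I_N) : (y == s + a) = (a == y - s).
Proof. by rewrite addrC -subr_eq eq_sym. Qed.

Lemma sum2_ind (y s z t : 'I_N) :
  \sum_(a : 'I_N) \sum_(b : 'I_N) ind R (y == s + a) * ind R (z == t + b) = 1.
Proof.
under eq_bigr do rewrite -mulr_sumr.
rewrite -mulr_suml.
under eq_bigr do rewrite eq_shift.
under [X in _ * X]eq_bigr do rewrite eq_shift.
by rewrite !sum_ind1 mulr1.
Qed.

Definition u : R := (N%:R ^+ 2)^-1.
Definition Idx := ((bool * 'I_4) * ('I_N * 'I_N))%type.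
Definition Lk (k : Idx) : mat3 R N :=
  Emat R (sig k.1.1 * rot k.2.1)%g (tau k.1.2 * rot k.2.2)%g.
Definition ck (e : R) (k : Idx) : R :=
  u / 8 + (if k.2 == (0, 0) then e * (asg R k.1.1 * bco R k.1.2) else 0).

Lemma Lk_val k (p : pos N) :
  Lk k p = ind R (p.1.2 == sig k.1.1 p.1.1 + k.2.1) * ind R (p.2 == tau k.1.2 p.1.1 + k.2.2).
Proof.
rewrite /Lk ffunE mem_diagset !permM !rotE /ind.
by case: (_ == _); case: (_ == _); rewrite ?mulr1 ?mulr0.
Qed.

Lemma hull_A (e : R) : `|e| <= u / 8 ->
  Hull (@Lambda2 R N) [ffun p => u + e * Bm R p].
Proof.
move=> he.
have uN : N%:R != 0 :> R by rewrite pnatr_eq0.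
have -> : [ffun p => u + e * Bm R p] = [ffun p => \sum_k ck e k * Lk k p].
  apply/ffunP => p; rewrite !ffunE.
  under eq_bigr do rewrite /ck mulrDl.
  rewrite big_split /=; congr (_ + _).
    rewrite -mulr_sumr sum_pair.
    under eq_bigr do rewrite sum_pair.
    under eq_bigr do under eq_bigr do under eq_bigr do rewrite Lk_val /=.
    under eq_bigr do rewrite sum2_ind.
    rewrite sumr_const card_prod card_bool card_ord.
    by rewrite mulr_natr -mulr_natr -mulrA mulVf ?mulr1 // pnatr_eq0.
  rewrite sum_pair /Bm -factor big_distrlr /= mulr_sumr [RHS]sum_pair.
  apply: eq_bigr => b _; rewrite mulr_sumr; apply: eq_bigr => j _.
  rewrite (bigD1 (0, 0)) //= big1 ?addr0; last first.
    by move=> k /negbTE ->; rewrite mul0r.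
  rewrite Lk_val /= !addr0; ring.
have /andP [he1 he2] : - (u / 8) <= e <= u / 8 by rewrite -ler_norml.
have u0 : 0 < u by rewrite /u invr_gt0 exprn_gt0 // ltr0n.
apply: hull_fin.
- by move=> k; apply: Lambda2_Emat.
- move=> [[b j] [a c]]; rewrite /ck /=; case: ifP => _; last by rewrite addr0 divr_ge0 // ltW.
  case: b; case: j => [[|[|[|[|j]]]] Hj] //=; rewrite /asg /bco /=; lra.
rewrite big_split /= sumr_const !card_prod card_bool !card_ord sum_pair.
rewrite (eq_bigr (fun i => e * (asg R i.1 * bco R i.2))); last first.
  by move=> i _; rewrite (bigD1 (0, 0)) //= big1 ?addr0 // => k /negbTE ->.
rewrite sum_pair big_bool /= !big_ord_recl !big_ord0 /= /asg /bco /=.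
rewrite -[u / 8 *+ _]mulr_natr !natrM /u.
field. by move: uN; rewrite -addn3 natrD addrC.
Qed.
End Hull.

Arguments i0 {m}.
Arguments i1 {m}.
Arguments i2 {m}.


Section Per.
Variable R : realFieldType.
Variable m : nat.
Local Notation N := m.+3.
Local Notation uu := (@u R m).

Definition Fe (e : R) (D : {set pos N}) : R := \prod_(p in D) (uu + e * Bm R p).

Lemma sv0 (i : 'I_N) : i != i0 -> i != i1 -> sv R i = 0.
Proof. by rewrite /sv => /negbTE -> /negbTE ->. Qed.

Lemma prod_split (h : 'I_N -> R) (c : R) :
  (forall i, i != i0 -> i != i1 -> h i = c) ->
  \prod_i h i = h i0 * h i1 * \prod_(i : 'I_N | (i != i0) && (i != i1)) c.
Proof.
move=> H; rewrite (bigD1 i0) //= (bigD1 i1) //= mulrA; congr (_ * _).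
by apply: eq_bigr => i /andP [h0 h1]; apply: H.
Qed.

Definition rr : R := \prod_(i : 'I_N | (i != i0) && (i != i1)) uu.

Lemma Fe_diag e (s t : {perm 'I_N}) :
  Fe e (diagset s t) = (uu + e * Bm R (i0, s i0, t i0)) * (uu + e * Bm R (i1, s i1, t i1)) * rr.
Proof.
rewrite /Fe /diagset big_imset /=; last by move=> i j _ _; apply: diag_inj.
rewrite (prod_split (c := uu)) //.
by move=> i h0 h1; rewrite /Bm /= sv0 // !mul0r mulr0 addr0.
Qed.

Lemma sv_neq (a b : 'I_N) : a != b -> sv R a * sv R b <= 0.
Proof.
move=> ne; rewrite /sv.
case: (eqVneq a i0) => [ea|na0]; case: (eqVneq a i1) => [eb|na1];
case: (eqVneq b i0) => [fa|nb0]; case: (eqVneq b i1) => [fb|nb1]; rewrite ?mul0r ?mulr0 //;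
  subst; rewrite ?eqxx // in ne *; try lra.
Qed.

Lemma b01 (s t : {perm 'I_N}) : Bm R (i0, s i0, t i0) * Bm R (i1, s i1, t i1) <= 0.
Proof.
rewrite /Bm /=.
have ne : i0 != i1 :> 'I_N by [].
have h1 : sv R (s i0) * sv R (s i1) <= 0 by apply: sv_neq; rewrite (inj_eq perm_inj).
have h2 : sv R (t i0) * sv R (t i1) <= 0 by apply: sv_neq; rewrite (inj_eq perm_inj).
have -> : sv R i0 = 1 by [].
have -> : sv R i1 = -1 by [].


set a := sv R (s i0) in h1 *; set b := sv R (s i1) in h1 *.
set c := sv R (t i0) in h2 *; set d := sv R (t i1) in h2 *.
have -> : 1 * a * c * (-1 * b * d) = - ((a * b) * (c * d)) by ring.
by rewrite oppr_le0 mulr_le0.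
Qed.
End Per.

Arguments i0 {m}.
Arguments i1 {m}.

Section Fin.
Variable R : realFieldType.
Variable m : nat.
Local Notation N := m.+3.
Local Notation uu := (@u R m).

Lemma u_gt0 : 0 < uu.
Proof. by rewrite /u invr_gt0 exprn_gt0 // ltr0n. Qed.

Lemma rr_gt0 : 0 < rr R m.
Proof. by rewrite /rr prodr_gt0 // => i _; apply: u_gt0. Qed.

Lemma Fe0 (D : {set pos N}) : diagonal D -> Fe (0 : R) D = uu ^+ N.
Proof.
case/andP => /eqP cD _; rewrite /Fe.
under eq_bigr do rewrite mul0r addr0.
by rewrite prodr_const cD.
Qed.

Lemma Fe_le e (D : {set pos N}) : diagonal D -> Fe e D + Fe (- e) D <= 2 * uu ^+ N.
Proof.
move=> dD; rewrite -(Fe0 dD); case/diag_repr: dD => s [t ->].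
rewrite !Fe_diag.
have := b01 R s t; have := rr_gt0.
set b0 := Bm R _; set b1 := Bm R _; set r := rr R m => r0 hb.
have -> : (uu + e * b0) * (uu + e * b1) * r + (uu + - e * b0) * (uu + - e * b1) * r
  = 2 * ((uu + 0 * b0) * (uu + 0 * b1) * r) + 2 * (e ^+ 2 * (b0 * b1) * r) by ring.
rewrite gerDl; have e2 : 0 <= e ^+ 2 by apply: sqr_ge0.
rewrite pmulr_rle0 // pmulr_lle0 //; exact: mulr_ge0_le0.
Qed.

Definition D0 : {set pos N} := diagset 1%g (tperm i0 i1).

Lemma Fe_lt e : e != 0 -> Fe e D0 + Fe (- e) D0 < 2 * uu ^+ N.
Proof.
move=> e0; rewrite -(Fe0 (diagonal_diagset 1%g (tperm i0 i1))) /D0 !Fe_diag.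
have := rr_gt0; set r := rr R m => r0.
rewrite !perm1 tpermL tpermR /Bm /= /sv /=.
have e2 : 0 < e ^+ 2 by rewrite exprn_even_gt0.
nra.
Qed.
End Fin.

Unset Implicit Arguments.

Theorem lemma3p2 (R : realFieldType) (n : nat) (hn : (2 < n)%N) :
  exists A : mat3 R n,
    Hull (@Lambda2 R n) A /\
    (Per A < (n`!%:R / n%:R ^+ n) ^+ 2 \/
     (Per A = (n`!%:R / n%:R ^+ n) ^+ 2 /\ A <> constmat n (n%:R ^+ 2)^-1)).
Proof.
case: n hn => [|[|[|m]]] // _.
set N := m.+3.
pose uu := @u R m.
have u0 : 0 < uu := u_gt0 R m.
pose e := uu / 8.
have e0 : e != 0 by apply/eqP => h; move: h; rewrite /e; lra.
have he : `|e| <= uu / 8 by rewrite ger0_norm // /e; lra.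
have he' : `|- e| <= uu / 8 by rewrite normrN.
pose Ae (e' : R) : mat3 R N := [ffun p => uu + e' * Bm R p].
have P : forall e' : R, Per (Ae e') = \sum_(D : {set pos N} | diagonal D) Fe e' D.
  by move=> e'; rewrite /Per; apply: eq_bigr => D _; apply: eq_bigr => p _; rewrite ffunE.
have T : (N`!%:R / N%:R ^+ N) ^+ 2 = uu ^+ N * (N`! * N`!)%:R :> R.
  rewrite /uu /u expr_div_n natrM -exprVn -exprM mulnC exprM exprVn.
  by rewrite exprVn mulrC expr2.
have cnt : \sum_(D : {set pos N} | diagonal D) 2 * uu ^+ N <= 2 * (uu ^+ N * (N`! * N`!)%:R).
  rewrite (eq_bigl (fun D => D \in [set D : {set pos N} | diagonal D])); last by move=> D; rewrite inE.
  rewrite sumr_const -[_ *+ #|_|]mulr_natr -mulrA; apply: ler_wpM2l => //; apply: ler_wpM2l; first by rewrite exprn_ge0 // ltW.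
  by rewrite ler_nat card_diag.
have lt : Per (Ae e) + Per (Ae (- e)) < 2 * (N`!%:R / N%:R ^+ N) ^+ 2.
  rewrite !P -big_split /= T; apply: lt_le_trans cnt.
  rewrite (bigD1 (D0 m)) ?diagonal_diagset //= [X in _ < X](bigD1 (D0 m)) ?diagonal_diagset //=.
  apply: ltr_leD; first exact: Fe_lt.
  by apply: ler_sum => D /andP [dD _]; apply: Fe_le.
case: (ltP (Per (Ae e)) ((N`!%:R / N%:R ^+ N) ^+ 2)) => h.
  by exists (Ae e); split; [apply: hull_A | left].
exists (Ae (- e)); split; first exact: hull_A.
left; lra.
Qed.
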